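(* Let $G$ be a maximal $3$-$\gamma_{c}$-vertex critical graph with independence number $\alpha$ and connectivity $\kappa$. Then $\alpha\leq\kappa$.
   Context: All graphs are finite, simple and connected. The connectivity $\kappa(G)$ is the minimum cardinality of a vertex set whose removal disconnects $G$. A set $D\subseteq V(G)$ is a connected dominating set of $G$ if every vertex of $G$ is in $D$ or adjacent to a vertex of $D$, and $G[D]$ is connected; $\gamma_{c}(G)$ is the minimum cardinality of such a set. $G$ is $k$-$\gamma_{c}$-edge critical if $\gamma_{c}(G)=k$ and $\gamma_{c}(G+uv)<k$ for every pair of non-adjacent vertices $u,v$. A $2$-connected graph $G$ is $k$-$\gamma_{c}$-vertex critical if $\gamma_{c}(G)=k$ and $\gamma_{c}(G-v)<k$ for every $v\in V(G)$. $G$ is maximal $k$-$\gamma_{c}$-vertex critical if it is both $k$-$\gamma_{c}$-edge critical and $k$-$\gamma_{c}$-vertex critical. *)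

(* Defs.v *)
(* A finite simple graph is given by a vertex set V : {set T}
   over a finType T together with a symmetric irreflexive adjacency relation
   e : rel T (only edges between vertices of V matter). *)
From mathcomp Require Import all_boot all_order.
Set Implicit Arguments. Unset Strict Implicit. Unset Printing Implicit Defensive.

Section Graphs.
Variable T : finType.

Definition simple_graph (e : rel T) := symmetric e /\ irreflexive e.

(* the induced subgraph G[V] is connected (vacuous for V empty) *)
Definition connected_on (e : rel T) (V : {set T}) : bool :=
  [forall x in V, forall y in V,
     connect (fun a b => [&& a \in V, b \in V & e a b]) x y].

Definition dominating (e : rel T) (V D : {set T}) : bool :=
  [forall v in V, (v \in D) || [exists u in D, e u v]].

Definition cds (e : rel T) (V D : {set T}) : bool :=
  [&& D \subset V, dominating e V D & connected_on e D].

(* connected domination number: minimum cardinality of a cds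
   (V itself is a cds when G is connected, so #|V| is never the default) *)
Definition gamma_c (e : rel T) (V : {set T}) : nat :=
  \big[minn/#|V|]_(D : {set T} | cds e V D) #|D|.

(* connectivity: minimum cardinality of a vertex set whose removal disconnects
   the graph; convention #|V| - 1 when no such set exists (complete graphs) *)
Definition kappa (e : rel T) (V : {set T}) : nat :=
  \big[minn/#|V|.-1]_(S : {set T} | (S \subset V) && ~~ connected_on e (V :\: S)) #|S|.

Definition independent (e : rel T) (I : {set T}) : bool :=
  [forall x in I, forall y in I, ~~ e x y].

Definition alpha (e : rel T) (V : {set T}) : nat :=
  \max_(I : {set T} | (I \subset V) && independent e I) #|I|.

Definition add_edge (e : rel T) (u v : T) : rel T :=
  fun x y => [|| e x y, (x == u) && (y == v) | (x == v) && (y == u)].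

Definition edge_critical (k : nat) (e : rel T) (V : {set T}) : Prop :=
  gamma_c e V = k /\
  forall u v, u \in V -> v \in V -> u != v -> ~~ e u v ->
    gamma_c (add_edge e u v) V < k.

Definition two_connected (e : rel T) (V : {set T}) : Prop :=
  2 < #|V| /\ 2 <= kappa e V.

(* G - v is the graph on V :\ v *)
Definition vertex_critical (k : nat) (e : rel T) (V : {set T}) : Prop :=
  two_connected e V /\ gamma_c e V = k /\
  forall v, v \in V -> gamma_c e (V :\ v) < k.

Definition maximal_vertex_critical (k : nat) (e : rel T) (V : {set T}) : Prop :=
  edge_critical k e V /\ vertex_critical k e V.

End Graphs.

(* Main.v *)
Require Import Defs.
From mathcomp Require Import all_boot all_order.
From mathcomp Require Import zify.
Set Implicit Arguments. Unset Strict Implicit. Unset Printing Implicit Defensive.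

Section Core.
Variable T : finType.
Variable e : rel T.
Variable V : {set T}.
Hypothesis esym : symmetric e.
Hypothesis eirr : irreflexive e.

Definition dom2 (p q v : T) :=
  forall x, x \in V -> x != v -> [|| x == p, x == q, e p x | e q x].

Record vp (p q v : T) : Prop := VP {
  vp_p : p \in V; vp_q : q \in V; vp_e : e p q; vp_pv : p != v; vp_qv : q != v;
  vp_ep : ~~ e p v; vp_eq : ~~ e q v; vp_dom : dom2 p q v }.

Lemma vp_sym p q v : vp p q v -> vp q p v.
Proof.
case=> Hp Hq Hpq Hpv Hqv Hep Heq Hd; split=> //; first by rewrite esym.
move=> x Hx Hxv; move: (Hd x Hx Hxv); by rewrite orbA (orbC (x == p)) -orbA orbA (orbC (e p x)) -orbA.
Qed.

Hypothesis Hvp : forall v, v \in V -> exists p q, vp p q v.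
Hypothesis Hec : forall u v, u \in V -> v \in V -> u != v -> ~~ e u v ->
  (forall x, x \in V -> [|| x == u, x == v, e u x | e v x]) \/
  (exists w, vp u w v) \/ (exists w, vp v w u).

Lemma e_neq x y : e x y -> x != y.
Proof. by apply: contraTneq => ->; rewrite eirr. Qed.

Variable I : {set T}.
Hypothesis IV : I \subset V.
Hypothesis Iind : forall x y, x \in I -> y \in I -> ~~ e x y.
Hypothesis I3 : 3 <= #|I|.

Definition priv (t w : T) : bool :=
  [&& w \in V, w \notin I, ~~ e w t & [forall i in I, (i != t) ==> e w i]].

Lemma privP t w : priv t w ->
  [/\ w \in V, w \notin I, ~~ e w t & forall i, i \in I -> i != t -> e w i].
Proof.
case/and4P=> H1 H2 H3 /forall_inP H4; split=> // i Hi Hit.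
by have := H4 i Hi; rewrite Hit.
Qed.

Lemma priv_disj t t' w : t \in I -> t' \in I -> priv t w -> priv t' w -> t = t'.
Proof.
move=> Ht Ht' /privP [_ _ Hwt _] /privP [_ _ _ H]; apply/eqP/negPn/negP=> Hne.
by move: (H t Ht Hne); rewrite (negbTE Hwt).
Qed.

Lemma pair_priv p q t : t \in I -> p \in I -> vp p q t -> priv t q.
Proof.
move=> Ht Hp [Hp' Hq Hpq Hpt Hqt Hep Heq Hd].
have HqI : q \notin I by apply: contraL Hpq => HqI; exact: Iind.
apply/and4P; split=> //; apply/forall_inP=> i Hi; apply/implyP=> Hit.
have := Hd i (subsetP IV i Hi) Hit; case/or4P=> [/eqP->|/eqP Hiq|Hpi|//].
- by rewrite esym.
- by move: Hi; rewrite Hiq (negbTE HqI).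
- by move: (Iind Hp Hi); rewrite Hpi.
Qed.

Lemma third u t : u \in I -> t \in I -> exists2 c, c \in I & (c != u) && (c != t).
Proof.
move=> Hu Ht.
have : 0 < #|I :\ u :\ t|.
  move: I3; rewrite (cardsD1 u I) Hu (cardsD1 t (I :\ u)); case: (t \in I :\ u) => /=; lia.
rewrite card_gt0 => /set0Pn [c]; rewrite !inE => /and3P [Hct Hcu Hc].
by exists c => //; rewrite Hct Hcu.
Qed.

Lemma arc u t : u \in I -> t \in I -> u != t ->
  (exists w, vp u w t) \/ (exists w, vp t w u).
Proof.
move=> Hu Ht Hut.
case: (Hec (subsetP IV u Hu) (subsetP IV t Ht) Hut (Iind Hu Ht)) => [Hd|//].
exfalso; have [c Hc /andP [Hcu Hct]] := third Hu Ht.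
have := Hd c (subsetP IV c Hc).
by rewrite (negbTE Hcu) (negbTE Hct) (negbTE (Iind Hu Hc)) (negbTE (Iind Ht Hc)).
Qed.

Lemma sdr_card (D X : {set T}) (P : T -> pred T) :
  (forall t, t \in D -> exists2 x, x \in X & P t x) ->
  (forall t t' x, t \in D -> t' \in D -> P t x -> P t' x -> t = t') ->
  #|D| <= #|X|.
Proof.
move=> Hex Hdisj.
pose f t := odflt t [pick x in X | P t x].
have Hf t : t \in D -> f t \in X /\ P t (f t).
  move=> Ht; rewrite /f; case: pickP => [x /andP [H1 H2] //|H].
  by have [x Hx HP] := Hex t Ht; move: (H x); rewrite Hx HP.
have Hinj : {in D &, injective f}.
  move=> t t' Ht Ht' Heq; have [_ H1] := Hf t Ht; have [_ H2] := Hf t' Ht'.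
  by apply: (Hdisj t t' (f t)) => //; rewrite Heq.
rewrite -(card_in_imset Hinj); apply: subset_leq_card.
by apply/subsetP=> x /imsetP [t Ht ->]; case: (Hf t Ht).
Qed.

Lemma sdr_eq (D X : {set T}) (P : T -> pred T) :
  (forall t, t \in D -> exists2 x, x \in X & P t x) ->
  (forall t t' x, t \in D -> t' \in D -> P t x -> P t' x -> t = t') ->
  #|X| <= #|D| ->
  forall x, x \in X -> exists2 t, t \in D & P t x /\ (forall y, y \in X -> P t y -> y = x).
Proof.
move=> Hex Hdisj Hle.
pose f t := odflt t [pick x in X | P t x].
have Hf t : t \in D -> f t \in X /\ P t (f t).
  move=> Ht; rewrite /f; case: pickP => [x /andP [H1 H2] //|H].
  by have [x Hx HP] := Hex t Ht; move: (H x); rewrite Hx HP.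
have Hinj : {in D &, injective f}.
  move=> t t' Ht Ht' Heq; have [_ H1] := Hf t Ht; have [_ H2] := Hf t' Ht'.
  by apply: (Hdisj t t' (f t)) => //; rewrite Heq.
have Hsub : [set f t | t in D] \subset X.
  by apply/subsetP=> x /imsetP [t Ht ->]; case: (Hf t Ht).
have HeqX : [set f t | t in D] = X.
  by apply/eqP; rewrite eqEcard Hsub (card_in_imset Hinj).
have Hall y : y \in X -> exists2 t, t \in D & y = f t.
  by rewrite -HeqX => /imsetP.
move=> x Hx; have [t Ht ->] := Hall x Hx.
exists t => //; split; first by case: (Hf t Ht).
move=> y Hy HPy; have [t' Ht' Hyt'] := Hall y Hy.
have [_ HP'] := Hf t' Ht'; rewrite Hyt' in HPy.
by rewrite Hyt' (Hdisj t' t (f t') Ht' Ht HP' HPy).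
Qed.


Lemma zdom z a u b : z \in V -> ~~ e z a -> z != a -> z != b -> vp a u b -> e z u.
Proof.
move=> Hz Hza Hzna Hzb [_ _ Hau _ _ _ _ Hd].
have := Hd z Hz Hzb; rewrite (negbTE Hzna) /=.
case/or3P=> [/eqP Hzu|Haz|Huz]; last by rewrite esym.
- by move: Hau; rewrite -Hzu esym (negbTE Hza).
- by move: Hza; rewrite esym Haz.
Qed.

Lemma clique_contra z w : z \in V -> w \in V -> z != w ->
  (forall n, n \in V -> e z n -> n != w -> e w n) -> False.
Proof.
move=> Hz Hw Hzw' Hcl; have [p [q [Hp Hq Hpq Hpw Hqw Hep Heq Hd]]] := Hvp Hw.
have := Hd z Hz Hzw'; case/or4P=> [/eqP Hzp|/eqP Hzq|Hpz|Hqz].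
- have Hzq : e z q by rewrite Hzp.
  by have := Hcl q Hq Hzq Hqw; rewrite esym (negbTE Heq).
- have Hzp : e z p by rewrite Hzq esym.
  by have := Hcl p Hp Hzp Hpw; rewrite esym (negbTE Hep).
- have Hzp : e z p by rewrite esym.
  by have := Hcl p Hp Hzp Hpw; rewrite esym (negbTE Hep).
- have Hzq : e z q by rewrite esym.
  by have := Hcl q Hq Hzq Hqw; rewrite esym (negbTE Heq).
Qed.

Lemma priv_adj t t' w w' : t \in I -> t' \in I -> t != t' ->
  priv t w -> priv t' w' -> w != w' ->
  (forall u, vp t u t' -> u = w') -> (forall u, vp t' u t -> u = w) -> e w w'.
Proof.
move=> Ht Ht' Htt' Hw Hw' Hww' H1 H2.
have [[Hw1 Hw2 Hw3 Hw4] [Hw1' Hw2' Hw3' Hw4']] := (privP Hw, privP Hw').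
case: (arc Ht Ht' Htt') => [[u Hu]|[u Hu]].
- have Hu' := H1 u Hu; subst u; case: Hu => _ _ _ _ _ _ _ Hd.
  have Hwt' : w != t' by apply: contraNneq Hw2 => ->.
  have := Hd w Hw1 Hwt'; case/or4P=> [/eqP Hwt|/eqP Hwe|Htw|]; last by rewrite esym.
  + by move: Hw2; rewrite Hwt Ht.
  + by move: Hww'; rewrite Hwe eqxx.
  + by move: Hw3; rewrite esym Htw.
- have Hu' := H2 u Hu; subst u; case: Hu => _ _ _ _ _ _ _ Hd.
  have Hw't : w' != t by apply: contraNneq Hw2' => ->.
  have := Hd w' Hw1' Hw't; case/or4P=> [/eqP Hwt|/eqP Hwe|Htw|//].
  + by move: Hw2'; rewrite Hwt Ht'.
  + by move: Hww'; rewrite Hwe eqxx.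
  + by move: Hw3'; rewrite esym Htw.
Qed.

Lemma atmost1 (A D : {set T}) :
  (forall a a', a \in A -> a \notin D -> a' \in A -> a' \notin D -> a = a') ->
  #|A| <= #|A :&: D| + 1.
Proof.
move=> H; rewrite -(cardsID D A) leq_add2l.
apply/card_le1_eqP => a a'; rewrite !inE => /andP [Ha1 Ha2] /andP [Ha1' Ha2'].
exact: H.
Qed.

Lemma L1 z : z \in V -> #|I| <= #|[set x in V | e z x]|.
Proof.
move=> Hz.
set NZ := [set x in V | e z x].
set A := [set a in I | (a != z) && ~~ e z a].
set X := NZ :\: I.
set D := [set t in A | [exists x in X, priv t x]].
have inNZ x : (x \in NZ) = (x \in V) && e z x by rewrite inE.
have inX x : (x \in X) = (x \notin I) && (x \in V) && e z x by rewrite !inE andbA.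
have inA a : (a \in A) = [&& a \in I, a != z & ~~ e z a] by rewrite inE.
have IVx x : x \in I -> x \in V by move/(subsetP IV).
have wit a u t : a \in A -> t \in I -> t != z -> vp a u t -> u \in X /\ priv t u.
  move=> Ha Ht Htz Hv; rewrite inA in Ha; case/and3P: Ha => HaI Haz Hza.
  have Hp := pair_priv Ht HaI Hv; split=> //.
  case/privP: Hp => HuV HuI _ _; rewrite inX HuI HuV /=.
  by apply: (zdom Hz Hza _ _ Hv); rewrite eq_sym.
have covA a t u : a \in A -> t \in A -> vp a u t -> t \in D.
  move=> Ha Ht Hv; have Ht' := Ht; rewrite inA in Ht'; case/and3P: Ht' => HtI Htz _.
  have [HuX Hpu] := wit a u t Ha HtI Htz Hv.
  by rewrite inE Ht; apply/exists_inP; exists u.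
have DA : D \subset A by apply/subsetP=> t; rewrite inE => /andP [].
have DI : D \subset I.
  by apply: (subset_trans DA); apply/subsetP=> a; rewrite inA => /and3P [].
have A1 : #|A| <= #|D| + 1.
  rewrite -(setIidPr DA); apply: atmost1 => a a' Ha HaD Ha' Ha'D.
  apply/eqP/negPn/negP => Hne.
  have HaI : a \in I by move: Ha; rewrite inA => /and3P [].
  have Ha'I : a' \in I by move: Ha'; rewrite inA => /and3P [].
  case: (arc HaI Ha'I Hne) => [[u Hu]|[u Hu]].
  - by move: Ha'D; rewrite (covA a a' u Ha Ha' Hu).
  - by move: HaD; rewrite (covA a' a u Ha' Ha Hu).
have Hex t : t \in D -> exists2 x, x \in X & priv t x.
  by rewrite inE => /andP [_ /exists_inP].
have Hdisj t t' x : t \in D -> t' \in D -> priv t x -> priv t' x -> t = t'.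
  by move=> Ht Ht'; apply: priv_disj; apply: (subsetP DI).
have DX : #|D| <= #|X| := sdr_card Hex Hdisj.
have cardNZ : #|NZ| = #|NZ :&: I| + #|X| by rewrite cardsID.
have inAI a : a \in A -> [/\ a \in I, a != z & ~~ e z a].
  by rewrite inA => /and3P.
have cliq (X0 : {set T}) :
   (forall t u, t \in D -> priv t u -> u \in X -> u \in X0) ->
   #|X0| <= #|D| ->
   forall t w, t \in D -> priv t w -> w \in X0 ->
   forall m, m \in X0 -> m != w -> e w m.
  move=> Hcl HX0D t w Ht Hw HwX0 m Hm Hmw.
  have Hex0 t1 : t1 \in D -> exists2 x, x \in X0 & priv t1 x.
    move=> Ht1; have [x Hx Hp] := Hex t1 Ht1; exists x => //; exact: Hcl Ht1 Hp Hx.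
  have U := sdr_eq Hex0 Hdisj HX0D.
  have [t' Ht' [Hpm Hum]] := U m Hm.
  have [t'' Ht'' [Hpw Huw]] := U w HwX0.
  have Et : t'' = t := Hdisj _ _ _ Ht'' Ht Hpw Hw.
  subst t''.
  have Htt' : t != t'.
    by apply/eqP => Ett; subst t'; move: Hmw; rewrite (Huw m Hm Hpm) eqxx.
  have HtA : t \in A := subsetP DA t Ht.
  have Ht'A : t' \in A := subsetP DA t' Ht'.
  have [HtI Htz _] := inAI t HtA.
  have [Ht'I Ht'z _] := inAI t' Ht'A.
  apply: (priv_adj HtI Ht'I Htt' Hw Hpm); first by rewrite eq_sym.
  - move=> u Hu; have [HuX Hpu] := wit t u t' HtA Ht'I Ht'z Hu.
    exact: Hum u (Hcl t' u Ht' Hpu HuX) Hpu.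
  - move=> u Hu; have [HuX Hpu] := wit t' u t Ht'A HtI Htz Hu.
    exact: Huw u (Hcl t u Ht Hpu HuX) Hpu.
have uniqX (X0 : {set T}) :
   (forall t u, t \in D -> priv t u -> u \in X -> u \in X0) ->
   #|X0| <= #|D| ->
   forall t w y, t \in D -> priv t w -> w \in X0 -> y \in X0 -> priv t y -> y = w.
  move=> Hcl HX0D t w y Ht Hw HwX0 Hy Hpy.
  have Hex0 t1 : t1 \in D -> exists2 x, x \in X0 & priv t1 x.
    move=> Ht1; have [x Hx Hp] := Hex t1 Ht1; exists x => //; exact: Hcl Ht1 Hp Hx.
  have [t'' Ht'' [Hpw Huw]] := sdr_eq Hex0 Hdisj HX0D HwX0.
  have Et : t'' = t := Hdisj _ _ _ Ht'' Ht Hpw Hw.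
  by subst t''; apply: Huw.
have zw w : w \in X -> z != w.
  by rewrite inX => /andP [_ Hzw]; apply: e_neq.
have wV w : w \in X -> w \in V by rewrite inX => /andP [/andP [_ ->]].
case: (boolP (z \in I)) => HzI.
- have NZI0 n : e z n -> n \notin I.
    by move=> Hzn; apply: contraL Hzn => HnI; apply: Iind.
  have cardI : #|I| = #|A| + 1.
    rewrite (cardsD1 z I) HzI addnC; congr (_ + _); apply: eq_card => x.
    rewrite inA in_setD1; case Hx: (x \in I); rewrite ?andbF //=.
    by rewrite (Iind HzI Hx) andbT.
  have cardNZ' : #|NZ| = #|X|.
    rewrite cardNZ; suff -> : NZ :&: I = set0 by rewrite cards0.
    apply/setP=> x; rewrite !inE; apply/negbTE/negP => /andP [/andP [_ Hzx] HxI].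
    by move: (NZI0 x Hzx); rewrite HxI.
  rewrite cardI cardNZ' leqNgt; apply/negP => HXA.
  have A2 : 2 <= #|A|.
    move: I3 cardI; generalize #|I| #|A| => n1 n2; clear -n1 n2; lia.
  case: (boolP (A \subset D)) => HAD.
  + have HAD' : #|A| <= #|D| := subset_leq_card HAD.
    have X0 : #|X| <= #|D|.
      move: HXA HAD'; generalize #|X| #|A| #|D| => n1 n2 n3; clear -n1 n2 n3; lia.
    have [t Ht] : exists t, t \in D.
      apply/set0Pn; rewrite -card_gt0; move: HAD' A2; generalize #|A| #|D| => n1 n2; clear -n1 n2; lia.
    have [w Hw Hpw] := Hex t Ht.
    have Hc := cliq X (fun _ _ _ _ H => H) X0 t w Ht Hpw Hw.
    apply: (clique_contra Hz (wV w Hw) (zw w Hw)) => n HnV Hzn Hnw.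
    apply: Hc Hnw; by rewrite inX HnV Hzn (NZI0 n Hzn).
  + move/subsetPn: HAD => [a0 Ha0 Ha0D].
    have [a0I a0z za0] := inAI a0 Ha0.
    have [n [HnV Hzn Hna0]] : exists n, [/\ n \in V, e z n & ~~ e n a0].
      have [p [q [Hp Hq Hepq Hpa Hqa Hepa Heqa Hd]]] := Hvp (IVx a0 a0I).
      have za0' : z != a0 by rewrite eq_sym.
      case/or4P: (Hd z Hz za0') => [/eqP Hzp|/eqP Hzq|Hpz|Hqz].
      * by exists q; split=> //; rewrite Hzp.
      * by exists p; split=> //; rewrite Hzq esym.
      * by exists p; split=> //; rewrite esym.
      * by exists q; split=> //; rewrite esym.
    have HnX : n \in X by rewrite inX HnV Hzn (NZI0 n Hzn).
    set X' := X :\ n.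
    have Hcl' t u : t \in D -> priv t u -> u \in X -> u \in X'.
      move=> Ht Hpu HuX; rewrite in_setD1 HuX andbT.
      have Ha0t : a0 != t by apply: contraNneq Ha0D => ->.
      case/privP: Hpu => _ _ _ H; have Hua0 := H a0 a0I Ha0t.
      by apply: contraTneq Hua0 => ->.
    have cardX' : #|X| = #|X'| + 1 by rewrite (cardsD1 n X) HnX addnC.
    have HD1 : #|D| < #|A|.
      by apply: proper_card; apply/properP; split=> //; exists a0.
    have X'D : #|X'| <= #|D|.
      move: cardX' HXA A1; generalize #|X'| #|X| #|A| #|D| => n1 n2 n3 n4; clear -n1 n2 n3 n4; lia.
    have [t Ht] : exists t, t \in D.
      apply/set0Pn; rewrite -card_gt0; move: A1 A2; generalize #|A| #|D| => n1 n2; clear -n1 n2; lia.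
    have [w Hw Hpw] := Hex t Ht.
    have Hw' := Hcl' t w Ht Hpw Hw.
    have Hc := cliq X' Hcl' X'D t w Ht Hpw Hw'.
    have Ht2 := subsetP DA t Ht.
    have [tI tz zt] := inAI t Ht2.
    apply: (clique_contra Hz (wV w Hw) (zw w Hw)) => m HmV Hzm Hmw.
    have HmX : m \in X by rewrite inX HmV Hzm (NZI0 m Hzm).
    case: (eqVneq m n) => [Emn|Hmn]; last by apply: Hc Hmw; rewrite in_setD1 Hmn.
    subst m.
    have Ha0t : a0 != t by apply: contraNneq Ha0D => ->.
    case: (arc a0I tI Ha0t) => [[u Hu]|[u Hu]].
    * have [HuX Hpu] := wit a0 u t Ha0 tI tz Hu.
      have Euw := uniqX X' Hcl' X'D t w u Ht Hpw Hw' (Hcl' t u Ht Hpu HuX) Hpu.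
      subst u; case: Hu => _ _ _ _ _ _ _ Hd.
      have Hnt : n != t by apply: contraNneq (NZI0 n Hzn) => ->.
      case/or4P: (Hd n HnV Hnt) => [/eqP Hna|/eqP Hnw|Han|//].
      -- by move: (NZI0 n Hzn); rewrite Hna a0I.
      -- by move: Hmw; rewrite Hnw eqxx.
      -- by move: Hna0; rewrite esym Han.
    * have a0z' : a0 != z by [].
      have [HuX Hpu] := wit t u a0 Ht2 a0I a0z' Hu.
      have : a0 \in D by rewrite inE Ha0; apply/exists_inP; exists u.
      by rewrite (negbTE Ha0D).
- have cardI : #|I| = #|NZ :&: I| + #|A|.
    rewrite -(cardsID NZ I) setIC; congr (_ + _); apply: eq_card => x.
    rewrite inA !inE; case Hx: (x \in I); rewrite ?andbF //=.
    have Hxz : x != z by apply: contraNneq HzI => <-.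
    by rewrite andbT (IVx x Hx) Hxz.
  rewrite cardI cardNZ leq_add2l leqNgt; apply/negP => HXA.
  have XD : #|X| <= #|D|.
    move: HXA A1 DX; generalize #|X| #|A| #|D| => n1 n2 n3; clear -n1 n2 n3; lia.
  have [a0 Ha0 Ha0D] : exists2 a0, a0 \in A & a0 \notin D.
    apply/subsetPn/negP => HAD; have := subset_leq_card HAD.
    move: HXA DX; generalize #|X| #|A| #|D| => n1 n2 n3; clear -n1 n2 n3; lia.
  have [a0I a0z za0] := inAI a0 Ha0.
  case: (set_0Vmem D) => [HD0|[t Ht]].
  + have HX0 : X = set0.
      by apply/eqP; rewrite -cards_eq0; move: XD; rewrite HD0 cards0 leqn0.
    have NZsubI n : n \in V -> e z n -> n \in I.
      move=> HnV Hzn; apply/negPn/negP => HnI.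
      have : n \in X by rewrite inX HnV Hzn HnI.
      by rewrite HX0 inE.
    have [b Hb] : exists b, b \in NZ :&: I.
      apply/set0Pn; rewrite -card_gt0.
      move: A1 I3 cardI; rewrite HD0 cards0; generalize #|NZ :&: I| #|A| #|I| => n1 n2 n3; clear -n1 n2 n3; lia.
    move: Hb; rewrite !inE => /andP [/andP [bV zb] bI].
    have Hba0 : b != a0 by apply: contraNneq za0 => <-.
    have Hzb : z != b by apply: e_neq.
    case: (arc bI a0I Hba0) => [[w Hw]|[w Hw]].
    * have Hpw := pair_priv a0I bI Hw.
      case: (eqVneq w z) => [Ewz|Hwz].
      -- subst w.
         have [p [q Hpq]] := Hvp bV.
         have key p1 q1 : vp p1 q1 b -> (z == p1) || e p1 z -> False.
           move=> [Hp Hq Hepq Hpb Hqb Hepb Heqb Hd] /orP [/eqP Hzp|Hpz].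
           ++ by move: Hepb; rewrite -Hzp zb.
           ++ have p1I : p1 \in I by apply: NZsubI; rewrite // esym.
              have q1I : q1 \notin I by apply: contraL Hepq; apply: Iind.
              have Hq1a : q1 != a0 by apply: contraNneq q1I => ->.
              case: Hw => _ _ _ _ _ _ _ Hd2.
              case/or4P: (Hd2 q1 Hq Hq1a) => [/eqP Hqb'|/eqP Hqz|Hbq|Hzq].
              ** by move: q1I; rewrite Hqb' bI.
              ** by move: Heqb; rewrite Hqz zb.
              ** by move: Heqb; rewrite esym Hbq.
              ** by move: q1I; rewrite (NZsubI q1 Hq Hzq).
         case: (Hpq) => _ _ _ _ _ _ _ Hd.
         case/or4P: (Hd z Hz Hzb) => [Hzp|Hzq|Hpz|Hqz].
         ++ by apply: (key p q Hpq); rewrite Hzp.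
         ++ by apply: (key q p (vp_sym Hpq)); rewrite Hzq.
         ++ by apply: (key p q Hpq); rewrite Hpz orbT.
         ++ by apply: (key q p (vp_sym Hpq)); rewrite Hqz orbT.
      -- case/privP: (Hpw) => HwV _ _ Hwi.
         apply: (clique_contra Hz HwV); first by rewrite eq_sym.
         move=> n HnV Hzn Hnw; apply: Hwi; first exact: NZsubI.
         by apply: contraNneq za0 => <-.
    * have Hbz : b != z by rewrite eq_sym.
      have [HwX _] := wit a0 w b Ha0 bI Hbz Hw.
      by move: HwX; rewrite HX0 inE.
  + have [w Hw Hpw] := Hex t Ht.
    have Hc := cliq X (fun _ _ _ _ H => H) XD t w Ht Hpw Hw.
    have [tI tz zt] := inAI t (subsetP DA t Ht).
    apply: (clique_contra Hz (wV w Hw) (zw w Hw)) => m HmV Hzm Hmw.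
    case: (boolP (m \in I)) => HmI.
    * case/privP: Hpw => _ _ _ Hwi; apply: Hwi => //.
      by apply: contraNneq zt => <-.
    * by apply: Hc Hmw; rewrite inX HmI HmV Hzm.
Qed.

Lemma main_cut (S : {set T}) x0 y0 :
  x0 \in V :\: S -> y0 \in V :\: S ->
  ~~ connect (fun a b => [&& a \in V :\: S, b \in V :\: S & e a b]) x0 y0 ->
  (forall x, x \in V :\: S -> exists2 y, y \in V :\: S & e x y) ->
  #|I| <= #|S|.
Proof.
move=> Hx0 Hy0 Hnc Hniso.
set W := V :\: S in Hx0 Hy0 Hnc Hniso *.
set ce := (fun a b => [&& a \in W, b \in W & e a b]) in Hnc.
have inW x : (x \in W) = (x \notin S) && (x \in V) by rewrite in_setD.
have ce_sym : connect_sym ce.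
  apply: sym_connect_sym => a b; rewrite /ce esym.
  by case: (a \in W); case: (b \in W).
have cedge a b : a \in W -> b \in W -> e a b -> connect ce a b.
  by move=> Ha Hb Hab; apply: connect1; rewrite /ce Ha Hb Hab.
have IVx x : x \in I -> x \in V by move/(subsetP IV).
have pairS v p q : vp p q v -> (p \in S) || (q \in S).
  move=> Hv; apply/negPn/negP; rewrite negb_or => /andP [HpS HqS].
  case: Hv => Hp Hq Hpq Hpv Hqv Hep Heq Hd.
  have pW : p \in W by rewrite inW HpS Hp.
  have qW : q \in W by rewrite inW HqS Hq.
  have Hne x : x \in W -> x != v -> connect ce p x.
    move=> Hx Hxv; have HxV : x \in V by move: Hx; rewrite inW => /andP [].
    case/or4P: (Hd x HxV Hxv) => [/eqP ->|/eqP ->|Hpx|Hqx].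
    - exact: connect0.
    - exact: cedge.
    - exact: cedge.
    - exact: connect_trans (cedge p q pW qW Hpq) (cedge q x qW Hx Hqx).
  have Hall x : x \in W -> connect ce p x.
    move=> Hx; case: (eqVneq x v) => [Exv|Hxv]; last exact: Hne.
    subst x; have [y Hy Hvy] := Hniso v Hx.
    have Hyv : y != v by rewrite eq_sym; apply: e_neq.
    apply: connect_trans (Hne y Hy Hyv) _.
    by apply: cedge => //; rewrite esym.
  move: Hnc; apply/negP/negPn.
  by apply: connect_trans (Hall y0 Hy0); rewrite ce_sym; apply: Hall.
rewrite leqNgt; apply/negP => HSI.
set A := I :\: S.
set B := I :&: S.
set R := S :\: I.
set D := [set t in I | [exists x in R, priv t x]].
have inA x : (x \in A) = (x \notin S) && (x \in I) by rewrite in_setD.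
have inB x : (x \in B) = (x \in I) && (x \in S) by rewrite in_setI.
have inR x : (x \in R) = (x \notin I) && (x \in S) by rewrite in_setD.
have cardS : #|S| = #|B| + #|R|.
  by rewrite -(cardsID I S) setIC.
have cardI : #|I| = #|B| + #|A|.
  by rewrite -(cardsID S I).
have RA : #|R| < #|A|.
  move: HSI; rewrite cardS cardI; generalize #|B| #|R| #|A| => n1 n2 n3; clear -n1 n2 n3; lia.
have DI : D \subset I by apply/subsetP=> t; rewrite inE => /andP [].
have Hex t : t \in D -> exists2 x, x \in R & priv t x.
  by rewrite inE => /andP [_ /exists_inP].
have Hdisj t t' x : t \in D -> t' \in D -> priv t x -> priv t' x -> t = t'.
  by move=> Ht Ht'; apply: priv_disj; apply: (subsetP DI).
have DR : #|D| <= #|R| := sdr_card Hex Hdisj.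
have arcA a u t : a \in A -> t \in I -> vp a u t -> t \in D /\ (u \in R /\ priv t u).
  move=> Ha Ht Hv; have [aS aI] : a \notin S /\ a \in I by move: Ha; rewrite inA => /andP [].
  have Hpu := pair_priv Ht aI Hv.
  have uS : u \in S by case/orP: (pairS t a u Hv) => //; rewrite (negbTE aS).
  have uR : u \in R by case/privP: (Hpu) => _ HuI _ _; rewrite inR HuI uS.
  by split=> //; rewrite inE Ht; apply/exists_inP; exists u.
have A1 : #|A| <= #|A :&: D| + 1.
  apply: atmost1 => a a' Ha HaD Ha' Ha'D; apply/eqP/negPn/negP => Hne.
  have aI : a \in I by move: Ha; rewrite inA => /andP [].
  have a'I : a' \in I by move: Ha'; rewrite inA => /andP [].
  case: (arc aI a'I Hne) => [[u Hu]|[u Hu]].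
  - by move: Ha'D; have [-> _] := arcA a u a' Ha a'I Hu.
  - by move: HaD; have [-> _] := arcA a' u a Ha' aI Hu.
have DAB : #|D| = #|B :&: D| + #|A :&: D|.
  have E1 : D :&: S = B :&: D.
    apply/setP => x; rewrite !in_setI; case Hx: (x \in D); rewrite ?andbF //=.
    by rewrite (subsetP DI x Hx) andbT.
  have E2 : D :\: S = A :&: D.
    apply/setP => x; rewrite in_setD !in_setI inA; case Hx: (x \in D); rewrite ?andbF //=.
    by rewrite (subsetP DI x Hx) !andbT.
  by rewrite -(cardsID S D) E1 E2.
have BD0 : #|B :&: D| = 0.
  move: DAB DR RA A1; generalize #|D| #|B :&: D| #|A :&: D| #|R| #|A| => n1 n2 n3 n4 n5; clear -n1 n2 n3 n4 n5; lia.
have RD : #|R| <= #|D|.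
  move: DAB DR RA A1; generalize #|D| #|B :&: D| #|A :&: D| #|R| #|A| => n1 n2 n3 n4 n5; clear -n1 n2 n3 n4 n5; lia.
have BD b : b \in B -> b \notin D.
  move=> Hb; apply/negP => HbD.
  have : b \in B :&: D by rewrite in_setI Hb HbD.
  by move/eqP: BD0; rewrite cards_eq0 => /eqP ->; rewrite inE.
have [a0 Ha0 Ha0D] : exists2 a0, a0 \in A & a0 \notin D.
  apply/subsetPn/negP => HAD.
  have : #|A :&: D| = #|A| by rewrite (setIidPl HAD).
  move: A1 RA DR DAB BD0; generalize #|D| #|B :&: D| #|A :&: D| #|R| #|A| => n1 n2 n3 n4 n5; clear -n1 n2 n3 n4 n5; lia.
have [a0S a0I] : a0 \notin S /\ a0 \in I by move: Ha0; rewrite inA => /andP [].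
have a0V := IVx a0 a0I.
have a0W : a0 \in W by rewrite inW a0S a0V.
have U := sdr_eq Hex Hdisj RD.
have Rown r : r \in R -> exists2 t, t \in D &
    [/\ t \in A, t != a0, priv t r & forall y, y \in R -> priv t y -> y = r].
  move=> Hr; have [t Ht [Hpt Hu]] := U r Hr; exists t => //; split=> //.
  - have tI := subsetP DI t Ht; rewrite inA tI andbT.
    by apply/negP => tS; move: (BD t); rewrite inB tI tS Ht => /(_ isT).
  - by apply: contraNneq Ha0D => <-.
have Radj r i : r \in R -> i \in I -> i \notin D -> e r i.
  move=> Hr Hi HiD; have [t Ht [_ _ Hpt _]] := Rown r Hr.
  case/privP: Hpt => _ _ _ H; apply: H => //.
  by apply: contraNneq HiD => ->.
have inSnotR x i : x \in S -> i \in I -> i \notin D -> ~~ e x i -> x \in B.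
  move=> HxS Hi HiD Hxi; case: (boolP (x \in I)) => HxI; first by rewrite inB HxI HxS.
  have : x \in R by rewrite inR HxI HxS.
  by move/Radj => /(_ i Hi HiD); rewrite (negbTE Hxi).
have [b0 Hb0] : exists b0, b0 \in B.
  have [p [q Hpq]] := Hvp a0V.
  case/orP: (pairS a0 p q Hpq) => HS.
  - by exists p; apply: (inSnotR p a0) => //; case: Hpq.
  - by exists q; apply: (inSnotR q a0) => //; case: Hpq.
have bfacts b : b \in B -> [/\ b \in I, b \in S, b \in V & b \notin D].
  by move=> Hb; have := Hb; rewrite inB => /andP [bI bS]; split => //; [apply: IVx | apply: BD].
have bpair b : b \in B -> exists p1 q1, [/\ vp p1 q1 b, p1 \in B, q1 \in W & e q1 a0].
  move=> Hb; have [bI bS bV bD] := bfacts b Hb.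
  have fin p1 q1 : vp p1 q1 b -> p1 \in B -> exists p1 q1, [/\ vp p1 q1 b, p1 \in B, q1 \in W & e q1 a0].
    move=> Hv Hp1; exists p1, q1; split=> //.
    + have p1I : p1 \in I by move: Hp1; rewrite inB => /andP [].
      have Hpq := pair_priv bI p1I Hv.
      case/privP: (Hpq) => q1V q1I _ _.
      rewrite inW q1V andbT; apply/negP => q1S.
      have q1R : q1 \in R by rewrite inR q1I q1S.
      have [t Ht [_ _ Hpt _]] := Rown q1 q1R.
      have Etb := priv_disj (subsetP DI t Ht) bI Hpt Hpq.
      by move: bD; rewrite -Etb Ht.
    + have p1I : p1 \in I by move: Hp1; rewrite inB => /andP [].
      have Hpq := pair_priv bI p1I Hv.
      case/privP: Hpq => _ _ _ H; apply: H => //.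
      by apply: contraNneq a0S => ->.
  have [p [q Hpq]] := Hvp bV.
  case/orP: (pairS b p q Hpq) => HS.
  - by apply: (fin p q Hpq); apply: (inSnotR p b) => //; case: Hpq.
  - by apply: (fin q p (vp_sym Hpq)); apply: (inSnotR q b) => //; case: Hpq.
have [z zW Hnz] : exists2 z, z \in W & ~~ connect ce a0 z.
  case: (boolP (connect ce a0 x0)) => H0; last by exists x0.
  exists y0 => //; apply/negP => H1; move: Hnc; apply/negP/negPn.
  by apply: connect_trans _ H1; rewrite ce_sym.
have [zS zV] : z \notin S /\ z \in V by move: zW; rewrite inW => /andP [].
have za0 : z != a0 by apply: contraNneq Hnz => ->; exact: connect0.
have nza0 : ~~ e z a0.
  by apply: contraNN Hnz => Hza; apply: cedge => //; rewrite esym.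
have ZB : forall b, b \in B -> e z b.
  case: (Hec zV a0V za0 nza0) => [Hd|[[w Hw]|[w Hw]]].
  - move=> b Hb; have [bI bS bV bD] := bfacts b Hb.
    case/or4P: (Hd b bV) => [/eqP Ebz|/eqP Eba|Hzb|Hab] //.
    + by move: zS; rewrite -Ebz bS.
    + by move: a0S; rewrite -Eba bS.
    + by move: (Iind a0I bI); rewrite Hab.
  - have wS : w \in S by case/orP: (pairS a0 z w Hw) => //; rewrite (negbTE zS).
    have wB : w \in B by apply: (inSnotR w a0) => //; case: Hw.
    have wI : w \in I by move: wB; rewrite inB => /andP [].
    have Hpz := pair_priv a0I wI (vp_sym Hw).
    move=> b Hb; have [bI bS bV bD] := bfacts b Hb.
    case/privP: Hpz => _ _ _ H; apply: H => //.
    by apply: contraNneq a0S => <-.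
  - exfalso.
    have wS : w \in S by case/orP: (pairS z a0 w Hw) => //; rewrite (negbTE a0S).
    have wI : w \notin I by apply: contraL (vp_e Hw); apply: Iind.
    have wR : w \in R by rewrite inR wI wS.
    have [t Ht [tA ta0 Hpt _]] := Rown w wR.
    have tI := subsetP DI t Ht.
    have Etz : t = z.
      apply/eqP/negPn/negP => Htz; case: Hw => _ _ _ _ _ _ _ Hd.
      case/or4P: (Hd t (IVx t tI) Htz) => [/eqP Eta|/eqP Etw|Hat|Hwt].
      + by move: ta0; rewrite Eta eqxx.
      + by move: wI; rewrite -Etw tI.
      + by move: (Iind a0I tI); rewrite Hat.
      + by case/privP: Hpt => _ _ H _; move: H; rewrite Hwt.
    have zI : z \in I by rewrite -Etz.
    have [p1 [q1 [Hv Hp1 Hq1 Hqa]]] := bpair b0 Hb0.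
    have [b0I b0S b0V b0D] := bfacts b0 Hb0.
    have Hzb0 : z != b0 by apply: contraNneq zS => ->.
    have Hcq : connect ce a0 q1 by apply: cedge => //; rewrite esym.
    case: Hv => _ _ _ _ _ _ _ Hd.
    case/or4P: (Hd z zV Hzb0) => [/eqP Ezp|/eqP Ezq|Hpz|Hqz].
    + by move: Hp1; rewrite inB -Ezp (negbTE zS) andbF.
    + by move: Hnz; rewrite Ezq Hcq.
    + have p1I : p1 \in I by move: Hp1; rewrite inB => /andP [].
      by move: (Iind p1I zI); rewrite Hpz.
    + by move: Hnz; rewrite (connect_trans Hcq (cedge q1 z Hq1 zW Hqz)).
have zI : z \notin I.
  by apply/negP => zI; have [b0I _ _ _] := bfacts b0 Hb0; move: (Iind zI b0I); rewrite ZB.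
have [p [q Hpq]] := Hvp zV.
have key p1 q1 : vp p1 q1 z -> p1 \in S -> False.
  move=> Hv Hp1.
  have p1R : p1 \in R.
    rewrite inR Hp1 andbT; apply/negP => p1I.
    have p1B : p1 \in B by rewrite inB p1I Hp1.
    by move: (vp_ep Hv); rewrite esym ZB.
  have [t Ht [tA ta0 Hpt Hut]] := Rown p1 p1R.
  have tI := subsetP DI t Ht.
  have a0t : a0 != t by rewrite eq_sym.
  case: (arc a0I tI a0t) => [[u Hu]|[u Hu]].
  - have [_ [uR Hpu]] := arcA a0 u t Ha0 tI Hu.
    have Eup := Hut u uR Hpu.
    subst u; case: Hu => _ _ _ _ _ _ _ Hd.
    have Hzt : z != t by apply: contraNneq zI => ->.
    case/or4P: (Hd z zV Hzt) => [/eqP Eza|/eqP Ezp|Haz|Hpz].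
    + by move: za0; rewrite Eza eqxx.
    + by move: zS; rewrite Ezp Hp1.
    + by move: nza0; rewrite esym Haz.
    + by move: (vp_ep Hv); rewrite Hpz.
  - have [Ha0D' _] := arcA t u a0 tA a0I Hu.
    by move: Ha0D; rewrite Ha0D'.
case/orP: (pairS z p q Hpq) => HS.
- exact: key p q Hpq HS.
- exact: key q p (vp_sym Hpq) HS.
Qed.

End Core.

Lemma bigmin_le (I : finType) (P : pred I) (F : I -> nat) d i :
  P i -> \big[minn/d]_(j | P j) F j <= F i.
Proof.
move=> Pi; have : i \in index_enum I by rewrite mem_index_enum.
elim: (index_enum I) => [//|j s IH]; rewrite big_cons inE => /orP [/eqP Eij|Hi].
- by subst j; rewrite Pi geq_minl.
- case: (P j); last exact: IH Hi.
  exact: leq_trans (geq_minr _ _) (IH Hi).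
Qed.

Lemma geq_bigmin (I : finType) (P : pred I) (F : I -> nat) d c :
  c <= d -> (forall i, P i -> c <= F i) -> c <= \big[minn/d]_(j | P j) F j.
Proof.
move=> Hd HF; apply: (big_ind (fun x => c <= x)) => // x y Hx Hy.
by rewrite leq_min Hx Hy.
Qed.

Lemma bigmin_lt (I : finType) (P : pred I) (F : I -> nat) d c :
  \big[minn/d]_(j | P j) F j < c -> d < c \/ exists2 i, P i & F i < c.
Proof.
move=> H; case: (ltnP d c) => Hd; first by left.
right; case: (boolP [exists i, P i && (F i < c)]) => [/existsP [i /andP [Pi Fi]]|Hn].
  by exists i.
exfalso; have : c <= \big[minn/d]_(j | P j) F j.
  apply: geq_bigmin => // i Pi; rewrite leqNgt; apply/negP => Hi.
  by move: Hn; rewrite negb_exists => /forallP /(_ i); rewrite Pi Hi.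
by rewrite leqNgt H.
Qed.

Section Iface.
Variable T : finType.

Lemma conn_single (r : rel T) d : connected_on r [set d].
Proof.
apply/forall_inP => x; rewrite inE => /eqP ->.
by apply/forall_inP => y; rewrite inE => /eqP ->; exact: connect0.
Qed.

Lemma conn_pair (r : rel T) p q : r p q -> r q p -> connected_on r [set p; q].
Proof.
move=> Hpq Hqp.
have Hp : p \in [set p; q] by rewrite !inE eqxx.
have Hq : q \in [set p; q] by rewrite !inE eqxx orbT.
apply/forall_inP => x; rewrite !inE => /orP [] /eqP ->;
apply/forall_inP => y; rewrite !inE => /orP [] /eqP ->; try exact: connect0.
- by apply: connect1; rewrite Hp Hq Hpq.
- by apply: connect1; rewrite Hp Hq Hqp.
Qed.

Lemma conn_pair_edge (r : rel T) p q : irreflexive r -> p != q ->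
  connected_on r [set p; q] -> r p q.
Proof.
move=> Hirr Hpq /forall_inP Hc.
have Hp : p \in [set p; q] by rewrite !inE eqxx.
have Hq : q \in [set p; q] by rewrite !inE eqxx orbT.
have := Hc p Hp => /forall_inP /(_ q Hq) /connectP [s].
case: s => [_ /= Eqp|x s /= /andP [/and3P [_ Hx Hpx] _] _].
  by move: Hpq; rewrite Eqp eqxx.
move: Hx; rewrite !inE => /orP [] /eqP Ex; subst x; last by [].
by rewrite Hirr in Hpx.
Qed.

Lemma dom_single (r : rel T) (W : {set T}) d v : dominating r W [set d] -> v \in W -> (v == d) || r d v.
Proof.
move=> /forall_inP H Hv; have := H v Hv; rewrite inE; case: (v == d) => //= /exists_inP [u].
by rewrite inE => /eqP ->.
Qed.

Lemma dom_pair (r : rel T) (W : {set T}) p q v : dominating r W [set p; q] -> v \in W ->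
  [|| v == p, v == q, r p v | r q v].
Proof.
move=> /forall_inP H Hv; have := H v Hv; rewrite !inE.
case/orP => [/orP [->|->]|/exists_inP [u]]; rewrite ?orbT //.
by rewrite !inE => /orP [] /eqP -> ->; rewrite !orbT.
Qed.

Lemma cds_single (r : rel T) (W : {set T}) d : d \in W -> (forall v, v \in W -> (v == d) || r d v) ->
  cds r W [set d].
Proof.
move=> Hd H; apply/and3P; split; first by rewrite sub1set.
- apply/forall_inP => v Hv; case/orP: (H v Hv) => [Hvd|Hdv]; first by rewrite inE Hvd.
  by apply/orP; right; apply/exists_inP; exists d; rewrite ?inE.
- exact: conn_single.
Qed.

Lemma cds_pair (r : rel T) (W : {set T}) p q : p \in W -> q \in W -> r p q -> r q p ->
  (forall v, v \in W -> [|| v == p, v == q, r p v | r q v]) -> cds r W [set p; q].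
Proof.
move=> Hp Hq Hpq Hqp H; apply/and3P; split.
- by apply/subsetP => x; rewrite !inE => /orP [] /eqP ->.
- apply/forall_inP => v Hv; case/or4P: (H v Hv) => [Hvp|Hvq|Hpv|Hqv].
  + by rewrite !inE Hvp.
  + by rewrite !inE Hvq orbT.
  + by apply/orP; right; apply/exists_inP; exists p; rewrite ?inE ?eqxx.
  + by apply/orP; right; apply/exists_inP; exists q; rewrite ?inE ?eqxx ?orbT.
- exact: conn_pair.
Qed.

Lemma small_cds (r : rel T) (W D : {set T}) : irreflexive r -> cds r W D -> #|D| < 3 ->
  (exists v, v \in W) ->
  (exists d, D = [set d]) \/ (exists p q, [/\ p != q, D = [set p; q] & r p q]).
Proof.
move=> Hirr /and3P [HDW Hdom Hconn] HD [v Hv].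
move: HD; case E: #|D| => [|[|[|n]]] // _.
- exfalso; move/eqP: E; rewrite cards_eq0 => /eqP HD0.
  move/forall_inP: Hdom => /(_ v Hv); rewrite HD0 inE /=.
  by case/exists_inP => u; rewrite inE.
- by left; move/eqP: E => /cards1P.
- right; move/eqP: E => /cards2P [p [q [Hpq HD]]].
  exists p, q; split=> //; apply: conn_pair_edge => //; by rewrite -HD.
Qed.

End Iface.

Section Derive.
Variable T : finType.
Variable e : rel T.
Variable V : {set T}.
Hypothesis esym : symmetric e.
Hypothesis eirr : irreflexive e.
Hypothesis Hconn : connected_on e V.
Hypothesis Hgc : gamma_c e V = 3.
Hypothesis HV3 : 2 < #|V|.
Hypothesis Hk : 2 <= kappa e V.
Hypothesis Hvc : forall v, v \in V -> gamma_c e (V :\ v) < 3.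
Hypothesis Hecr : forall u v, u \in V -> v \in V -> u != v -> ~~ e u v ->
  gamma_c (add_edge e u v) V < 3.

Lemma nodom1 d : d \in V -> (forall x, x \in V -> (x == d) || e d x) -> False.
Proof.
move=> Hd H; have := bigmin_le (fun D : {set T} => #|D|) #|V| (cds_single Hd H).
by move: Hgc; rewrite /gamma_c => ->; rewrite cards1.
Qed.

Lemma nodom2 p q : p \in V -> q \in V -> e p q ->
  (forall x, x \in V -> [|| x == p, x == q, e p x | e q x]) -> False.
Proof.
move=> Hp Hq Hpq H.
have Hqp : e q p by rewrite esym.
have := bigmin_le (fun D : {set T} => #|D|) #|V| (cds_pair Hp Hq Hpq Hqp H).
move: Hgc; rewrite /gamma_c => ->; rewrite cards2.
by case: (p != q).
Qed.

Lemma exV2 v : v \in V -> exists2 y, y \in V & y != v.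
Proof.
move=> Hv; have : 0 < #|V :\ v|.
  by move: HV3; rewrite (cardsD1 v V) Hv add1n ltnS => /ltnW.
by rewrite card_gt0 => /set0Pn [y]; rewrite in_setD1 => /andP [Hyv Hy]; exists y.
Qed.

Lemma nbr v : v \in V -> exists2 x, x \in V & e v x.
Proof.
move=> Hv; have [y Hy Hyv] := exV2 Hv.
move/forall_inP: Hconn => /(_ v Hv) /forall_inP /(_ y Hy) /connectP [s].
case: s => [_ /= Eyv|x s /= /andP [/and3P [_ Hx Hvx] _] _].
  by move: Hyv; rewrite Eyv eqxx.
by exists x.
Qed.

Lemma GVconn v : v \in V -> connected_on e (V :\ v).
Proof.
move=> Hv; apply/negPn/negP => Hn.
have HP : ([set v] \subset V) && ~~ connected_on e (V :\: [set v]) by rewrite sub1set Hv Hn.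
have := @bigmin_le _ (fun S : {set T} => (S \subset V) && ~~ connected_on e (V :\: S)) (fun S : {set T} => #|S|) #|V|.-1 _ HP.
by move: Hk; rewrite /kappa cards1 => H1 H2; have := leq_trans H1 H2.
Qed.

Lemma Hvp_der v : v \in V -> exists p q, vp e V p q v.
Proof.
move=> Hv.
have [D HD HD3] : exists2 D, cds e (V :\ v) D & #|D| < 3.
  have := Hvc Hv; rewrite /gamma_c => /bigmin_lt [Hlt|[D HD HD3]]; last by exists D.
  exists (V :\ v) => //; apply/and3P; split => //; last exact: GVconn.
  by apply/forall_inP => x ->.
have HW : exists x, x \in V :\ v.
  by have [y Hy Hyv] := exV2 Hv; exists y; rewrite in_setD1 Hyv Hy.
case: (small_cds eirr HD HD3 HW) => [[d Ed]|[p [q [Hpq Ed Hepq]]]]; subst D;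
  case/and3P: HD => Hsub Hdom _.
- exfalso.
  have : d \in V :\ v by rewrite -sub1set.
  rewrite in_setD1 => /andP [Hdv HdV].
  have dom x : x \in V -> x != v -> (x == d) || e d x.
    by move=> Hx Hxv; apply: (dom_single Hdom); rewrite in_setD1 Hxv Hx.
  case: (boolP (e d v)) => Hedv.
  + apply: (nodom1 HdV) => x Hx; case: (eqVneq x v) => [->|Hxv]; last exact: dom.
    by rewrite Hedv orbT.
  + have [x Hx Hvx] := nbr Hv.
    have Hxv : x != v by rewrite eq_sym; apply/negP => /eqP E; move: Hvx; rewrite E eirr.
    have Hdx : e d x.
      have := dom x Hx Hxv; case: (eqVneq x d) => [E|_] //=.
      by move: Hvx; rewrite E esym (negbTE Hedv).
    apply: (nodom2 HdV Hx Hdx) => y Hy; case: (eqVneq y v) => [->|Hyv].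
    * by rewrite (esym x v) Hvx !orbT.
    * by case/orP: (dom y Hy Hyv) => ->; rewrite ?orbT.
- have Hp : p \in V :\ v by apply: (subsetP Hsub); rewrite !inE eqxx.
  have Hq : q \in V :\ v by apply: (subsetP Hsub); rewrite !inE eqxx orbT.
  move: Hp Hq; rewrite !in_setD1 => /andP [Hpv HpV] /andP [Hqv HqV].
  have dom x : x \in V -> x != v -> [|| x == p, x == q, e p x | e q x].
    by move=> Hx Hxv; apply: (dom_pair Hdom); rewrite in_setD1 Hxv Hx.
  have Hnp : ~~ e p v.
    apply/negP => Hpv'; apply: (nodom2 HpV HqV Hepq) => x Hx.
    case: (eqVneq x v) => [->|Hxv]; last exact: dom.
    by rewrite Hpv' !orbT.
  have Hnq : ~~ e q v.
    apply/negP => Hqv'; apply: (nodom2 HpV HqV Hepq) => x Hx.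
    case: (eqVneq x v) => [->|Hxv]; last exact: dom.
    by rewrite Hqv' !orbT.
  by exists p, q; split.
Qed.

Lemma single_case a b : a \in V -> b \in V -> a != b -> ~~ e a b ->
  (forall x, x \in V -> x != b -> (x == a) || e a x) -> False.
Proof.
move=> Ha Hb Hab Heab H.
have [x Hx Hbx] := nbr Hb.
have Hxb : x != b by apply/negP => /eqP E; move: Hbx; rewrite E eirr.
have Hxa : x != a by apply/negP => /eqP E; move: Heab; rewrite esym -E Hbx.
have Hax : e a x by move: (H x Hx Hxb); rewrite (negbTE Hxa).
apply: (nodom2 Ha Hx Hax) => y Hy; case: (eqVneq y b) => [->|Hyb].
- by rewrite (esym x b) Hbx !orbT.
- by case/orP: (H y Hy Hyb) => ->; rewrite ?orbT.
Qed.

Lemma Hec_der u v : u \in V -> v \in V -> u != v -> ~~ e u v ->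
  (forall x, x \in V -> [|| x == u, x == v, e u x | e v x]) \/
  (exists w, vp e V u w v) \/ (exists w, vp e V v w u).
Proof.
move=> Hu Hv Huv Heuv.
set e' := add_edge e u v.
have e'E x y : e' x y = [|| e x y, (x == u) && (y == v) | (x == v) && (y == u)] by [].
have e'irr : irreflexive e'.
  move=> x; rewrite e'E eirr /=; apply/negP => /orP [] /andP [/eqP Ex /eqP E].
  - by move: Huv; rewrite -Ex E eqxx.
  - by move: Huv; rewrite -Ex E eqxx.
have [D HD HD3] : exists2 D, cds e' V D & #|D| < 3.
  have := Hecr Hu Hv Huv Heuv; rewrite /gamma_c => /bigmin_lt [Hlt|[D HD HD3]]; last by exists D.
  by move: Hlt; rewrite ltnS leqNgt HV3.
have HW : exists x, x \in V by exists u.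
case: (small_cds e'irr HD HD3 HW) => [[d Ed]|[p [q [Hpq Ed He'pq]]]]; subst D;
  case/and3P: HD => Hsub Hdom _.
- exfalso; have HdV : d \in V by rewrite -sub1set.
  have dom x : x \in V -> (x == d) || e' d x by move=> Hx; exact: dom_single Hdom Hx.
  case: (eqVneq d u) => [Edu|Hdu].
  + subst d; apply: (single_case Hu Hv Huv Heuv) => x Hx Hxv.
    by move: (dom x Hx); rewrite e'E (negbTE Hxv) (negbTE Huv) andbF /= ?orbF.
  + case: (eqVneq d v) => [Edv|Hdv].
    * subst d; have Hvu : v != u by rewrite eq_sym.
      have Hevu : ~~ e v u by rewrite esym.
      apply: (single_case Hv Hu Hvu Hevu) => x Hx Hxu.
      by move: (dom x Hx); rewrite e'E (negbTE Hxu) (negbTE Hvu) andbF /= ?orbF.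
    * apply: (nodom1 HdV) => x Hx.
      by move: (dom x Hx); rewrite e'E (negbTE Hdu) (negbTE Hdv) /= ?orbF.
- have HpV : p \in V by apply: (subsetP Hsub); rewrite !inE eqxx.
  have HqV : q \in V by apply: (subsetP Hsub); rewrite !inE eqxx orbT.
  have dom x : x \in V -> [|| x == p, x == q, e' p x | e' q x] by move=> Hx; exact: dom_pair Hdom Hx.
  case: (boolP (e p q)) => Hepq.
  + case: (boolP [forall x in V, [|| x == p, x == q, e p x | e q x]])
        => [/forall_inP Hall|/forall_inPn [x Hx Hnx]].
      by exfalso; apply: (nodom2 HpV HqV Hepq Hall).
    have pc a b : a \in V -> b \in V -> e a b ->
        (forall y, y \in V -> [|| y == a, y == b, e' a y | e' b y]) ->
        ~~ [|| x == a, x == b, e a x | e b x] -> e' a x ->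
        (exists w, vp e V u w v) \/ (exists w, vp e V v w u).
      move=> Ha Hb Hab Hdy Hnx' He'ax.
      move: Hnx'; rewrite !negb_or => /and4P [Hxa Hxb Heax Hebx].
      move: He'ax; rewrite e'E (negbTE Heax) /= => /orP [] /andP [/eqP Eau /eqP Exv].
      * subst a x; left; exists b.
        have Hbv : b != v by rewrite eq_sym.
        split=> // y Hy Hyv; move: (Hdy y Hy).
        by rewrite !e'E (negbTE Hyv) (negbTE Huv) (negbTE Hbv) !andbF /= ?orbF.
      * subst a x; right; exists b.
        have Hbu : b != u by rewrite eq_sym.
        have Hvu : v != u by rewrite eq_sym.
        have Hevu : ~~ e v u by rewrite esym.
        split=> // y Hy Hyu; move: (Hdy y Hy).
        by rewrite !e'E (negbTE Hyu) (negbTE Hvu) (negbTE Hbu) !andbF /= ?orbF.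
    right; case/or4P: (dom x Hx) => [/eqP Exp|/eqP Exq|He'px|He'qx].
    * by exfalso; move: Hnx; rewrite Exp eqxx.
    * by exfalso; move: Hnx; rewrite Exq eqxx orbT.
    * exact: (pc p q HpV HqV Hepq dom Hnx He'px).
    * apply: (pc q p HqV HpV _ _ _ He'qx); first by rewrite esym.
      - move=> y Hy; move: (dom y Hy).
        by case: (y == p); case: (y == q); case: (e' p y); case: (e' q y).
      - by move: Hnx; case: (x == p); case: (x == q); case: (e p x); case: (e q x).
  + left; move: He'pq; rewrite e'E (negbTE Hepq) /=.
    case/orP => /andP [/eqP Epu /eqP Eqv]; subst p q => x Hx; move: (dom x Hx); rewrite !e'E !eqxx;
    by move: (x == u) (x == v) (e u x) (e v x) (u == v) (v == u) => [] [] [] [] [] [].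
Qed.

End Derive.

Theorem theorem4p1 (T : finType) (e : rel T) (V : {set T}) :
  simple_graph e -> connected_on e V ->
  maximal_vertex_critical 3 e V ->
  alpha e V <= kappa e V.
Proof.
move=> [esym eirr] Hconn [[Hgc Hecr] [[HV3 Hk] [_ Hvc]]].
have Hvp := Hvp_der esym eirr Hconn Hgc HV3 Hk Hvc.
have Hec := Hec_der esym eirr Hconn Hgc HV3 Hecr.
rewrite /alpha; apply/bigmax_leqP => I /andP [IV HI].
have Iind : forall x y, x \in I -> y \in I -> ~~ e x y.
  by move=> x y Hx Hy; move/forall_inP: HI => /(_ x Hx) /forall_inP /(_ y Hy).
case: (leqP #|I| 2) => HI2; first exact: leq_trans HI2 Hk.
rewrite /kappa; apply: geq_bigmin.
- have [i Hi] : exists i, i \in I.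
    by apply/set0Pn; rewrite -card_gt0; apply: leq_ltn_trans _ HI2.
  have [x Hx Hix] := nbr Hconn HV3 (subsetP IV i Hi).
  have HxI : x \notin I by apply: contraL Hix => HxI; exact: Iind.
  have Hprop : I \proper V by apply/properP; split => //; exists x.
  move: (proper_card Hprop); generalize #|I| #|V| => n1 n2; clear; lia.
- move=> S /andP [SV HnS].
  move: HnS; rewrite /connected_on => /forall_inPn [x0 Hx0 /forall_inPn [y0 Hy0 Hn]].
  case: (boolP [exists z in V :\: S, [forall y in V :\: S, ~~ e z y]])
      => [/exists_inP [z Hz /forall_inP Hiso]|Hniso].
  + have HzV : z \in V by move: Hz; rewrite in_setD => /andP [].
    apply: leq_trans (L1 esym eirr Hvp Hec IV Iind HI2 HzV) _.
    apply: subset_leq_card; apply/subsetP => x; rewrite inE => /andP [HxV Hzx].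
    apply/negPn/negP => HxS.
    have : x \in V :\: S by rewrite in_setD HxS HxV.
    by move/Hiso; rewrite Hzx.
  + apply: (main_cut esym eirr Hvp Hec IV Iind HI2 Hx0 Hy0 Hn) => x Hx.
    move/exists_inPn: Hniso => /(_ x Hx) /forall_inPn [y Hy /negPn Hxy].
    by exists y.
Qed.
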